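(* Let $p$ be a prime, $q=p^2$, for $a\in\mathbb{F}_q$ write $\bar a = a^p$, $N(a)=a^{p+1}$, let $Q = \{(a,b) \in \mathbb{F}_q^2 : N(a)+N(b)=1\}$ and for $x=(a,b)\in Q$ let $\ell_x = \{(a+t\bar b,\ b-t\bar a): t\in\mathbb{F}_q\}$. Define $$S' = \{(x,y) \in \mathbb{F}_q^2 \times \mathbb{F}_q^2 : x \in Q,\ y \in \ell_x\}.$$ Then $|S'| = q\,|Q|$, and $S'$ contains no three points of the form $(x,y),(x,y+d),(x+d,y')$ with $x,y,y' \in \mathbb{F}_q^2$ and $d \in \mathbb{F}_q^2\setminus\{0\}$. *)

(* Defs.v *)
From HB Require Import structures.
From mathcomp Require Import all_boot all_order all_algebra all_field.
Set Implicit Arguments. Unset Strict Implicit. Unset Printing Implicit Defensive.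
Import GRing.Theory.
Local Open Scope ring_scope.

Section Defs.
Variables (F : finFieldType) (p : nat).

Definition fbar (a : F) : F := a ^+ p.
Definition fnorm (a : F) : F := a ^+ p.+1.

Definition padd (x y : F * F) : F * F := (x.1 + y.1, x.2 + y.2).

Definition Qset : {set F * F} := [set x | fnorm x.1 + fnorm x.2 == 1].

Definition lineQ (x : F * F) : {set F * F} :=
  [set (x.1 + t * fbar x.2, x.2 - t * fbar x.1) | t : F].

Definition Sprime : {set (F * F) * (F * F)} :=
  [set xy | (xy.1 \in Qset) && (xy.2 \in lineQ xy.1)].

End Defs.

(* Main.v *)
Require Import Defs.
From HB Require Import structures.
From mathcomp Require Import all_boot all_order all_algebra all_field.
From mathcomp Require Import ring.
Local Open Scope ring_scope.
Import GRing.Theory.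

Section Aux.
Variables (F : finFieldType) (p : nat).
Hypothesis hp : prime p.
Hypothesis hF : #|F| = (p ^ 2)%N.

Lemma hch : p \in [pchar F]. Proof. exact: card_finPcharP hF hp. Qed.

Lemma fD (u v : F) : (u + v) ^+ p = u ^+ p + v ^+ p.
Proof. exact: (pFrobenius_autD_comm hch (mulrC u v)). Qed.

Lemma fN (u : F) : (- u) ^+ p = - u ^+ p.
Proof. exact: (pFrobenius_autN hch u). Qed.

Lemma ff (u : F) : (u ^+ p) ^+ p = u.
Proof. have e : (p * p)%N = #|F| by rewrite hF expnS expn1.
by rewrite -exprM e expf_card. Qed.

Lemma f0 (u : F) : (u ^+ p == 0) = (u == 0).
Proof. by rewrite expf_eq0 prime_gt0. Qed.

Lemma Q_nz (x : F * F) : x \in Qset F p -> (x.1 != 0) || (x.2 != 0).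
Proof.
rewrite inE /fnorm; case: x => a b /=.
case: (a =P 0) => [->|] //=; case: (b =P 0) => [->|] //=.
by rewrite !expr0n /= addr0 eq_sym oner_eq0.
Qed.

Definition fl (u : (F * F) * F) : (F * F) * (F * F) :=
  (u.1, (u.1.1 + u.2 * fbar p u.1.2, u.1.2 - u.2 * fbar p u.1.1)).

Lemma Sprime_im : Sprime F p = fl @: setX (Qset F p) [set: F].
Proof.
apply/setP => [[x y]]; rewrite inE /=; apply/andP/imsetP.
- case=> Hx /imsetP [t _ ->]; exists (x, t) => //; rewrite inE Hx inE.
  done.
- case=> [[x' t]]; rewrite !inE /= => /andP [Hx _] [-> ->]; split => //.
  by apply/imsetP; exists t.
Qed.

Lemma fl_inj : {in setX (Qset F p) [set: F] &, injective fl}.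
Proof.
move=> [[a b] t] [x' t']; rewrite !inE /= => /andP [Hx _] _.
rewrite /fl /= => -[<- e1 e2].
have h1 : (t - t') * fbar p b = 0.
  by apply/eqP; rewrite mulrBl subr_eq0; apply/eqP; apply: (addrI a).
have h2 : (t - t') * fbar p a = 0.
  apply/eqP; rewrite mulrBl subr_eq0; apply/eqP.
  by apply: oppr_inj; apply: (addrI b).
have : (a, b) \in Qset F p by rewrite inE.
move=> /Q_nz => /= /orP [ha|hb].
- move: h2 => /eqP; rewrite mulf_eq0 /fbar f0 (negPf ha) orbF subr_eq0.
  by move/eqP->.
- move: h1 => /eqP; rewrite mulf_eq0 /fbar f0 (negPf hb) orbF subr_eq0.
  by move/eqP->.
Qed.

End Aux.

Theorem mainTheorem4 (F : finFieldType) (p : nat) :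
  prime p -> #|F| = (p ^ 2)%N ->
  #|Sprime F p| = (#|F| * #|Qset F p|)%N /\
  (forall (x y y' d : F * F), d != (0, 0) ->
     ~ [/\ (x, y) \in Sprime F p,
           (x, padd y d) \in Sprime F p &
           (padd x d, y') \in Sprime F p]).
Proof.
move=> hp hF.
have fD := @fD F p hp hF; have fN := @fN F p hp hF; have ff := @ff F p hF.
have f0 := @f0 F p hp.
split.
  by rewrite Sprime_im (card_in_imset (@fl_inj F p hp)) cardsX cardsT mulnC.
move=> [a b] y y' [d1 d2] hd [].
rewrite !inE /= => /andP [Hx /imsetP [t _ ey]] /andP [_ /imsetP [t' _ ey']]
  /andP [Hx' _].
rewrite ey /padd /= in ey'; case: ey' => e1 e2.
set s := t' - t.
have hd1 : d1 = s * fbar p b.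
  by rewrite /s; apply: (addrI (a + t * fbar p b)); rewrite e1 /=; ring.
have hd2 : d2 = - (s * fbar p a).
  by rewrite /s; apply: (addrI (b - t * fbar p a)); rewrite e2 /=; ring.
have hs : s != 0.
  by apply: contra hd => /eqP s0; rewrite hd1 hd2 s0 !mul0r oppr0.
move: Hx Hx'; rewrite /fnorm /= hd1 hd2 /fbar !exprSr => /eqP Q1 /eqP.
rewrite fD -mulNr fD !exprMn !ff fN.
have -> : ((a ^+ p + s ^+ p * b) * (a + s * b ^+ p) +
     (b ^+ p + - s ^+ p * a) * (b + - s * a ^+ p)) =
   (a ^+ p * a + b ^+ p * b) * (1 + s ^+ p * s) by ring.
rewrite Q1 mul1r => /eqP; rewrite -subr_eq0 addrC addKr mulf_eq0 f0.
by rewrite (negPf hs).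
Qed.
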